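(* Let $X$ and $Y$ be nonempty compact Hausdorff spaces, and let $E$ be a complex locally convex space with $E\neq\{0_E\}$. Suppose $T:C(X,E)\to C(Y,E)$ is a map (not assumed linear) such that $$\operatorname{Ran}(TF-TG)\subset \operatorname{Ran}(F-G)\quad\text{for all } F,G\in C(X,E).$$ Then there exists a continuous map $\varphi:Y\to X$ such that $$TF=T(1\otimes 0_E)+F\circ\varphi\quad\text{for all } F\in C(X,E).$$ In particular, if in addition $T(1\otimes 0_E)=1\otimes 0_E$, then $T$ is linear.
   Context: A locally convex space is a complex vector space with a Hausdorff topology making addition and scalar multiplication continuous and having a basis of neighborhoods of $0_E$ consisting of convex sets. $C(X,E)$ denotes the complex vector space (pointwise operations) of all continuous functions $X\to E$. For $F\in C(X,E)$, $\operatorname{Ran}(F)=\{F(x):x\in X\}$. For $f\in C(X)$ (continuous complex-valued functions on $X$) and $u\in E$, $f\otimes u:X\to E$ is the function $x\mapsto f(x)u$; thus $1\otimes 0_E$ is the constant function with value $0_E$. *)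

(* Defs.v *)
From Stdlib Require Import Reals Lra List Classical FunctionalExtensionality PropExtensionality.
Open Scope R_scope.

Definition Cplx : Type := (R * R)%type.
Definition C0 : Cplx := (0, 0).
Definition C1 : Cplx := (1, 0).
Definition Cadd (z w : Cplx) : Cplx := (fst z + fst w, snd z + snd w).
Definition Cmul (z w : Cplx) : Cplx :=
  (fst z * fst w - snd z * snd w, fst z * snd w + snd z * fst w).
Definition Cneg (z : Cplx) : Cplx := (- fst z, - snd z).
Definition Cmod (z : Cplx) : R := sqrt (fst z * fst z + snd z * snd z).
Definition RtoC (t : R) : Cplx := (t, 0).

Record topology (X : Type) := Topology {
  is_open : (X -> Prop) -> Prop;
  open_full : is_open (fun _ => True);
  open_inter : forall U V, is_open U -> is_open V -> is_open (fun x => U x /\ V x);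
  open_union : forall F : (X -> Prop) -> Prop,
      (forall U, F U -> is_open U) -> is_open (fun x => exists U, F U /\ U x)
}.
Arguments is_open {X} t U.

Definition continuous {X Y : Type} (tX : topology X) (tY : topology Y) (f : X -> Y) : Prop :=
  forall V, is_open tY V -> is_open tX (fun x => V (f x)).

Definition hausdorff {X : Type} (tX : topology X) : Prop :=
  forall x y : X, x <> y -> exists U V, is_open tX U /\ is_open tX V /\ U x /\ V y /\
     (forall z, U z -> V z -> False).

Definition compact_space {X : Type} (tX : topology X) : Prop :=
  forall F : (X -> Prop) -> Prop,
    (forall U, F U -> is_open tX U) -> (forall x, exists U, F U /\ U x) ->
    exists l : list (X -> Prop), (forall U, In U l -> F U) /\
       (forall x, exists U, In U l /\ U x).

Definition prod_open {A B : Type} (tA : topology A) (tB : topology B) (W : A * B -> Prop) : Prop :=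
  forall p, W p -> exists U V, is_open tA U /\ is_open tB V /\ U (fst p) /\ V (snd p) /\
    (forall a b, U a -> V b -> W (a, b)).

Lemma prod_open_full {A B} (tA : topology A) (tB : topology B) :
  prod_open tA tB (fun _ => True).
Proof.
  intros p _; exists (fun _ => True), (fun _ => True);
  repeat split; auto using open_full.
Qed.

Lemma prod_open_inter {A B} (tA : topology A) (tB : topology B) U V :
  prod_open tA tB U -> prod_open tA tB V -> prod_open tA tB (fun x => U x /\ V x).
Proof.
  intros HU HV p [Up Vp].
  destruct (HU p Up) as (U1 & U2 & o1 & o2 & a1 & a2 & h).
  destruct (HV p Vp) as (V1 & V2 & p1 & p2 & b1 & b2 & k).
  exists (fun x => U1 x /\ V1 x), (fun x => U2 x /\ V2 x).
  repeat split; try apply open_inter; auto; try tauto.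
  - apply h; tauto.
  - apply k; tauto.
Qed.

Lemma prod_open_union {A B} (tA : topology A) (tB : topology B) (F : (A * B -> Prop) -> Prop) :
  (forall U, F U -> prod_open tA tB U) -> prod_open tA tB (fun x => exists U, F U /\ U x).
Proof.
  intros H p (U & FU & Up).
  destruct (H U FU p Up) as (U1 & U2 & o1 & o2 & a1 & a2 & h).
  exists U1, U2; repeat split; auto.
  intros a b h1 h2; exists U; split; auto.
Qed.

Definition prod_topology {A B : Type} (tA : topology A) (tB : topology B) : topology (A * B) :=
  @Topology (A * B) (prod_open tA tB) (prod_open_full tA tB) (prod_open_inter tA tB)
           (prod_open_union tA tB).

Definition C_open (U : Cplx -> Prop) : Prop :=
  forall z, U z -> exists eps, 0 < eps /\
    forall w, Cmod (Cadd w (Cneg z)) < eps -> U w.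

Lemma C_open_full : C_open (fun _ => True).
Proof. intros z _; exists 1; split; auto; lra. Qed.

Lemma C_open_inter U V : C_open U -> C_open V -> C_open (fun x => U x /\ V x).
Proof.
  intros HU HV z [Uz Vz].
  destruct (HU z Uz) as (e1 & e1p & h1); destruct (HV z Vz) as (e2 & e2p & h2).
  exists (Rmin e1 e2); split.
  - apply Rmin_glb_lt; auto.
  - intros w hw; split; [apply h1 | apply h2];
    eapply Rlt_le_trans; eauto; [apply Rmin_l | apply Rmin_r].
Qed.

Lemma C_open_union (F : (Cplx -> Prop) -> Prop) :
  (forall U, F U -> C_open U) -> C_open (fun x => exists U, F U /\ U x).
Proof.
  intros H z (U & FU & Uz).
  destruct (H U FU z Uz) as (e & ep & h).
  exists e; split; auto; intros w hw; exists U; auto.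
Qed.

Definition C_topology : topology Cplx :=
  @Topology Cplx C_open C_open_full C_open_inter C_open_union.

Record cvs := CVS {
  vcar :> Type;
  vzero : vcar;
  vadd : vcar -> vcar -> vcar;
  vopp : vcar -> vcar;
  vscal : Cplx -> vcar -> vcar;
  vaddA : forall x y z, vadd x (vadd y z) = vadd (vadd x y) z;
  vaddC : forall x y, vadd x y = vadd y x;
  vadd0 : forall x, vadd x vzero = x;
  vaddN : forall x, vadd x (vopp x) = vzero;
  vscalA : forall a b x, vscal a (vscal b x) = vscal (Cmul a b) x;
  vscal1 : forall x, vscal C1 x = x;
  vscalDr : forall a x y, vscal a (vadd x y) = vadd (vscal a x) (vscal a y);
  vscalDl : forall a b x, vscal (Cadd a b) x = vadd (vscal a x) (vscal b x)
}.
Arguments vzero {c}.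
Arguments vadd {c}.
Arguments vopp {c}.
Arguments vscal {c}.

Definition vsub {E : cvs} (x y : E) : E := vadd x (vopp y).

Definition convex {E : cvs} (V : E -> Prop) : Prop :=
  forall x y t, V x -> V y -> 0 <= t <= 1 ->
    V (vadd (vscal (RtoC t) x) (vscal (RtoC (1 - t)) y)).

Definition nbhd {X : Type} (tX : topology X) (x : X) (N : X -> Prop) : Prop :=
  exists U, is_open tX U /\ U x /\ (forall y, U y -> N y).

Definition locally_convex (E : cvs) (tE : topology E) : Prop :=
  hausdorff tE /\
  continuous (prod_topology tE tE) tE (fun p => vadd (fst p) (snd p)) /\
  continuous (prod_topology C_topology tE) tE (fun p => vscal (fst p) (snd p)) /\
  (forall N, nbhd tE vzero N ->
     exists V, nbhd tE vzero V /\ convex V /\ (forall x, V x -> N x)).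

Definition CXE {X : Type} (tX : topology X) (E : cvs) (tE : topology E) : Type :=
  { F : X -> E | continuous tX tE F }.

Lemma const_continuous {X Y : Type} (tX : topology X) (tY : topology Y) (c : Y) :
  continuous tX tY (fun _ => c).
Proof.
  intros V _.
  destruct (classic (V c)) as [h | h].
  - assert (e : (fun _ : X => V c) = (fun _ => True)).
    { apply FunctionalExtensionality.functional_extensionality; intros; apply propositional_extensionality; tauto. }
    rewrite e; apply open_full.
  - assert (e : (fun _ : X => V c) = (fun x => exists U, (fun _ => False) U /\ U x)).
    { apply FunctionalExtensionality.functional_extensionality; intros;
      apply propositional_extensionality; split; [tauto | intros (U & [] & _)]. }
    rewrite e; apply open_union; intros U [].
Qed.

Definition zeroCXE {X : Type} (tX : topology X) (E : cvs) (tE : topology E) : CXE tX E tE :=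
  exist _ (fun _ => vzero) (const_continuous tX tE vzero).

(* Main.v *)
Require Import Defs.
From Stdlib Require Import Reals.
From Stdlib Require Import Lra Lia Arith Wf_nat List Classical FunctionalExtensionality PropExtensionality ProofIrrelevance ClassicalEpsilon.
Require Import Defs.
Import Defs.
Open Scope R_scope.


Lemma Cpair_eq (a b c d : R) : a = c -> b = d -> ((a, b) : Cplx) = (c, d).
Proof. intros; subst; reflexivity. Qed.

Lemma Cadd_00 : Cadd C0 C0 = C0.
Proof. unfold Cadd, C0; simpl; apply Cpair_eq; ring. Qed.

Definition Csub (a b : Cplx) : Cplx := Cadd a (Cneg b).

Lemma vadd0l (E : cvs) (x : E) : vadd vzero x = x.
Proof. rewrite vaddC; apply vadd0. Qed.

Lemma vadd_cancel (E : cvs) (a b : E) : vadd a b = a -> b = vzero.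
Proof.
  intro h. assert (e : vadd (vopp a) (vadd a b) = vadd (vopp a) a) by (rewrite h; reflexivity).
  rewrite vaddA, (vaddC _ (vopp a) a), vaddN, vadd0l in e. exact e.
Qed.

Lemma vscal_0r (E : cvs) (c : Cplx) : vscal c (@vzero E) = vzero.
Proof.
  apply (vadd_cancel E (vscal c vzero)). rewrite <- vscalDr, vadd0. reflexivity.
Qed.

Lemma vscal_0l (E : cvs) (x : E) : vscal C0 x = vzero.
Proof.
  apply (vadd_cancel E (vscal C0 x)). rewrite <- vscalDl, Cadd_00. reflexivity.
Qed.

Lemma vopp_unique (E : cvs) (x y : E) : vadd x y = vzero -> y = vopp x.
Proof.
  intro h. assert (e : vadd (vopp x) (vadd x y) = vadd (vopp x) vzero) by (rewrite h; reflexivity).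
  rewrite vaddA, (vaddC _ (vopp x) x), vaddN, vadd0l, vadd0 in e. exact e.
Qed.

Lemma vopp_scal (E : cvs) (x : E) : vopp x = vscal (-1, 0) x.
Proof.
  symmetry; apply vopp_unique.
  rewrite <- (vscal1 E x) at 1. rewrite <- vscalDl.
  replace (Cadd C1 (-1, 0)) with C0 by (unfold Cadd, C1, C0; simpl; apply Cpair_eq; ring).
  apply vscal_0l.
Qed.

Lemma vscal_sub (E : cvs) (a b : Cplx) (u : E) :
  vsub (vscal a u) (vscal b u) = vscal (Csub a b) u.
Proof.
  unfold vsub, Csub. rewrite vopp_scal, vscalA, vscalDl.
  f_equal. f_equal. destruct b as [b1 b2]; unfold Cmul, Cneg; simpl; apply Cpair_eq; ring.
Qed.

Lemma vadd_swap (E : cvs) (a b c d : E) : vadd (vadd a b) (vadd c d) = vadd (vadd a c) (vadd b d).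
Proof.
  rewrite <- !vaddA. f_equal. rewrite !vaddA. f_equal. apply vaddC.
Qed.

Lemma vopp_add (E : cvs) (a c : E) : vopp (vadd a c) = vadd (vopp a) (vopp c).
Proof.
  symmetry; apply vopp_unique. rewrite vadd_swap, !vaddN, vadd0. reflexivity.
Qed.

Lemma vsub_add2 (E : cvs) (a b c : E) : vsub (vadd a b) (vadd a c) = vsub b c.
Proof.
  unfold vsub. rewrite vopp_add, vadd_swap, vaddN, vadd0l. reflexivity.
Qed.

Lemma vopp_opp (E : cvs) (a : E) : vopp (vopp a) = a.
Proof. symmetry; apply vopp_unique. rewrite vaddC; apply vaddN. Qed.

Lemma vsub_sub (E : cvs) (a b c : E) : vsub (vsub a c) (vsub b c) = vsub a b.
Proof.
  unfold vsub. rewrite vopp_add, vopp_opp, vadd_swap, (vaddC _ (vopp c) c), vaddN, vadd0.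
  reflexivity.
Qed.

Lemma vsub_eq0 (E : cvs) (a b : E) : vsub a b = vzero -> a = b.
Proof.
  unfold vsub; intro h. assert (e : vadd (vadd a (vopp b)) b = vadd vzero b) by (rewrite h; reflexivity).
  rewrite <- vaddA, (vaddC _ (vopp b) b), vaddN, vadd0, vadd0l in e. exact e.
Qed.

Lemma vsub_self (E : cvs) (a : E) : vsub a a = vzero.
Proof. apply vaddN. Qed.

Lemma vsub_0r (E : cvs) (a : E) : vsub a vzero = a.
Proof.
  unfold vsub. rewrite <- (vopp_unique E vzero vzero (vadd0 E vzero)). apply vadd0.
Qed.

Lemma vadd_sub (E : cvs) (a b : E) : vadd b (vsub a b) = a.
Proof. unfold vsub. rewrite vaddC, <- vaddA, (vaddC _ (vopp b) b), vaddN, vadd0. reflexivity. Qed.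

Lemma vsub_add_l (E : cvs) (a b : E) : vsub (vadd a b) a = b.
Proof. unfold vsub. rewrite (vaddC _ a b), <- vaddA, vaddN, vadd0. reflexivity. Qed.

Definition Cinv (c : Cplx) : Cplx :=
  (fst c / (fst c * fst c + snd c * snd c), - snd c / (fst c * fst c + snd c * snd c)).

Lemma Cnz_pos (c : Cplx) : c <> C0 -> 0 < fst c * fst c + snd c * snd c.
Proof.
  destruct c as [a b]; simpl; intro h.
  destruct (Req_dec a 0); destruct (Req_dec b 0); subst.
  - exfalso; apply h; reflexivity.
  - nra. - nra. - nra.
Qed.

Lemma Cinv_l (c : Cplx) : c <> C0 -> Cmul (Cinv c) c = C1.
Proof.
  intro h; pose proof (Cnz_pos c h). destruct c as [a b]; unfold Cmul, Cinv, C1; simpl in *.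
  apply Cpair_eq; field; lra.
Qed.

Lemma vscal_zero_inv (E : cvs) (c : Cplx) (u : E) : vscal c u = vzero -> u <> vzero -> c = C0.
Proof.
  intros h hu. apply NNPP; intro hc. apply hu.
  rewrite <- (vscal1 E u), <- (Cinv_l c hc), <- vscalA, h. apply vscal_0r.
Qed.

Lemma vscal_inj (E : cvs) (a b : Cplx) (u : E) : vscal a u = vscal b u -> u <> vzero ->
  fst a = fst b /\ snd a = snd b.
Proof.
  intros h hu. assert (e : vscal (Csub a b) u = vzero) by (rewrite <- vscal_sub, h; apply vsub_self).
  apply vscal_zero_inv in e; auto. destruct a as [a1 a2], b as [b1 b2]; unfold Csub, Cadd, Cneg, C0 in e; simpl in *.
  injection e; intros; split; lra.
Qed.


Lemma open_of_local {Z : Type} (tZ : topology Z) (P : Z -> Prop) :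
  (forall z, P z -> exists U, is_open tZ U /\ U z /\ forall w, U w -> P w) -> is_open tZ P.
Proof.
  intro h.
  assert (e : P = (fun z => exists U, (fun U => is_open tZ U /\ forall w, U w -> P w) U /\ U z)).
  { apply functional_extensionality; intro z; apply propositional_extensionality; split.
    - intro hz; destruct (h z hz) as (U & o & uz & s); exists U; auto.
    - intros (U & (o & s) & uz); auto. }
  rewrite e; apply open_union; intros U [o _]; exact o.
Qed.

Definition rcont {Z : Type} (tZ : topology Z) (k : Z -> R) : Prop :=
  forall z eps, 0 < eps -> exists U, is_open tZ U /\ U z /\ forall w, U w -> Rabs (k w - k z) < eps.

Definition ccont {Z : Type} (tZ : topology Z) (c : Z -> Cplx) : Prop :=
  forall z eps, 0 < eps -> exists U, is_open tZ U /\ U z /\ forall w, U w -> Cmod (Cadd (c w) (Cneg (c z))) < eps.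

Lemma Cmod_le (z : Cplx) : Cmod z <= Rabs (fst z) + Rabs (snd z).
Proof.
  unfold Cmod. destruct z as [a b]; simpl.
  rewrite <- (sqrt_square (Rabs a + Rabs b)) by (pose proof (Rabs_pos a); pose proof (Rabs_pos b); lra).
  apply sqrt_le_1_alt.
  pose proof (Rabs_pos a); pose proof (Rabs_pos b).
  assert (a * a = Rabs a * Rabs a) by (rewrite <- Rabs_mult; rewrite Rabs_right; nra).
  assert (b * b = Rabs b * Rabs b) by (rewrite <- Rabs_mult; rewrite Rabs_right; nra).
  nra.
Qed.


Lemma ccont_scale_real {Z : Type} (tZ : topology Z) (lam : Cplx) (k : Z -> R) :
  rcont tZ k -> ccont tZ (fun z => Cmul lam (RtoC (k z))).
Proof.
  intros hk z eps he.
  set (M := Rabs (fst lam) + Rabs (snd lam) + 1).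
  assert (hM : 0 < M) by (unfold M; pose proof (Rabs_pos (fst lam)); pose proof (Rabs_pos (snd lam)); lra).
  destruct (hk z (eps / M)) as (U & o & uz & s). { apply Rdiv_lt_0_compat; lra. }
  exists U; repeat split; auto. intros w hw.
  eapply Rle_lt_trans; [apply Cmod_le|].
  destruct lam as [l1 l2]; unfold Cadd, Cneg, Cmul, RtoC; simpl.
  replace (l1 * k w - l2 * 0 + - (l1 * k z - l2 * 0)) with (l1 * (k w - k z)) by ring.
  replace (l1 * 0 + l2 * k w + - (l1 * 0 + l2 * k z)) with (l2 * (k w - k z)) by ring.
  rewrite !Rabs_mult. specialize (s w hw). unfold M in *; simpl in *.
  pose proof (Rabs_pos l1); pose proof (Rabs_pos l2); pose proof (Rabs_pos (k w - k z)).
  apply Rmult_lt_compat_r with (r := Rabs l1 + Rabs l2 + 1) in s; [|lra].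
  unfold Rdiv in s. rewrite Rmult_assoc, Rinv_l in s by lra. nra.
Qed.

Lemma ccont_ext {Z : Type} (tZ : topology Z) (c c' : Z -> Cplx) :
  (forall z, c z = c' z) -> ccont tZ c -> ccont tZ c'.
Proof. intros e h z eps he. destruct (h z eps he) as (U & o & uz & s). exists U; repeat split; auto.
  intros w hw; rewrite <- !e; auto. Qed.

Lemma ccont_real {Z : Type} (tZ : topology Z) (k : Z -> R) :
  rcont tZ k -> ccont tZ (fun z => RtoC (k z)).
Proof.
  intro h; apply (ccont_ext tZ (fun z => Cmul C1 (RtoC (k z)))).
  - intro z; unfold Cmul, C1, RtoC; simpl; apply Cpair_eq; ring.
  - apply ccont_scale_real; auto.
Qed.

Lemma rcont_ext {Z : Type} (tZ : topology Z) (k k' : Z -> R) :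
  (forall z, k z = k' z) -> rcont tZ k -> rcont tZ k'.
Proof. intros e h z eps he. destruct (h z eps he) as (U & o & uz & s). exists U; repeat split; auto.
  intros w hw; rewrite <- !e; auto. Qed.

Lemma rcont_const {Z : Type} (tZ : topology Z) (a : R) : rcont tZ (fun _ => a).
Proof. intros z eps he; exists (fun _ => True); repeat split; auto using open_full.
  intros; rewrite Rminus_diag, Rabs_R0; auto. Qed.

Lemma rcont_add {Z : Type} (tZ : topology Z) (k1 k2 : Z -> R) :
  rcont tZ k1 -> rcont tZ k2 -> rcont tZ (fun z => k1 z + k2 z).
Proof.
  intros h1 h2 z eps he.
  destruct (h1 z (eps/2)) as (U1 & o1 & u1 & s1); [lra|].
  destruct (h2 z (eps/2)) as (U2 & o2 & u2 & s2); [lra|].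
  exists (fun w => U1 w /\ U2 w); repeat split; auto using open_inter.
  intros w [a b]. specialize (s1 w a); specialize (s2 w b).
  replace (k1 w + k2 w - (k1 z + k2 z)) with ((k1 w - k1 z) + (k2 w - k2 z)) by ring.
  eapply Rle_lt_trans; [apply Rabs_triang|]. lra.
Qed.

Lemma rcont_scal {Z : Type} (tZ : topology Z) (a : R) (k : Z -> R) :
  rcont tZ k -> rcont tZ (fun z => a * k z).
Proof.
  intros h z eps he.
  destruct (h z (eps / (Rabs a + 1))) as (U & o & u & s).
  { apply Rdiv_lt_0_compat; pose proof (Rabs_pos a); lra. }
  exists U; repeat split; auto. intros w hw. specialize (s w hw).
  replace (a * k w - a * k z) with (a * (k w - k z)) by ring. rewrite Rabs_mult.
  pose proof (Rabs_pos a); pose proof (Rabs_pos (k w - k z)).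
  apply Rmult_lt_compat_r with (r := Rabs a + 1) in s; [|lra].
  unfold Rdiv in s. rewrite Rmult_assoc, Rinv_l in s by lra. nra.
Qed.

Lemma rcont_max0 {Z : Type} (tZ : topology Z) (k : Z -> R) :
  rcont tZ k -> rcont tZ (fun z => Rmax (k z) 0).
Proof.
  intros h z eps he. destruct (h z eps he) as (U & o & u & s).
  exists U; repeat split; auto. intros w hw. specialize (s w hw).
  unfold Rmax; destruct (Rle_dec (k w) 0); destruct (Rle_dec (k z) 0);
    revert s; unfold Rabs; repeat destruct Rcase_abs; intros; lra.
Qed.

Lemma open_pos {Z : Type} (tZ : topology Z) (g : Z -> R) (a : R) :
  rcont tZ g -> is_open tZ (fun z => a < g z).
Proof.
  intro h; apply open_of_local; intros z hz.
  destruct (h z (g z - a)) as (U & o & u & s); [lra|].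
  exists U; repeat split; auto. intros w hw; specialize (s w hw).
  revert s; unfold Rabs; destruct Rcase_abs; intros; lra.
Qed.

Lemma open_lt {Z : Type} (tZ : topology Z) (g : Z -> R) (a : R) :
  rcont tZ g -> is_open tZ (fun z => g z < a).
Proof.
  intro h; apply open_of_local; intros z hz.
  destruct (h z (a - g z)) as (U & o & u & s); [lra|].
  exists U; repeat split; auto. intros w hw; specialize (s w hw).
  revert s; unfold Rabs; destruct Rcase_abs; intros; lra.
Qed.

Lemma cont_scal {Z : Type} (tZ : topology Z) (E : cvs) (tE : topology E)
  (Hs : continuous (prod_topology C_topology tE) tE (fun p => vscal (fst p) (snd p)))
  (c : Z -> Cplx) (G : Z -> E) :
  ccont tZ c -> continuous tZ tE G -> continuous tZ tE (fun z => vscal (c z) (G z)).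
Proof.
  intros hc hG O hO. apply open_of_local. intros z hz.
  destruct (Hs O hO (c z, G z) hz) as (U1 & V1 & o1 & p1 & a1 & b1 & s1). simpl in *.
  destruct (o1 (c z) a1) as (eps & he & sU).
  destruct (hc z eps he) as (U2 & o2 & u2 & s2).
  exists (fun w => U2 w /\ V1 (G w)); repeat split; auto.
  - apply open_inter; [exact o2 | apply (hG V1 p1)].
  - intros w [a b]. apply (s1 (c w) (G w)); auto.
Qed.

Lemma cont_add {Z : Type} (tZ : topology Z) (E : cvs) (tE : topology E)
  (Ha : continuous (prod_topology tE tE) tE (fun p => vadd (fst p) (snd p)))
  (G1 G2 : Z -> E) :
  continuous tZ tE G1 -> continuous tZ tE G2 -> continuous tZ tE (fun z => vadd (G1 z) (G2 z)).
Proof.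
  intros h1 h2 O hO. apply open_of_local. intros z hz.
  destruct (Ha O hO (G1 z, G2 z) hz) as (U1 & V1 & o1 & p1 & a1 & b1 & s1). simpl in *.
  exists (fun w => U1 (G1 w) /\ V1 (G2 w)); repeat split; auto.
  - apply open_inter; [apply (h1 U1 o1) | apply (h2 V1 p1)].
  - intros w [a b]. apply (s1 (G1 w) (G2 w)); auto.
Qed.

Lemma open_neq {Z : Type} (tZ : topology Z) (E : cvs) (tE : topology E) (G : Z -> E) (e : E) :
  hausdorff tE -> continuous tZ tE G -> is_open tZ (fun z => G z <> e).
Proof.
  intros hH hG. apply open_of_local. intros z hz.
  destruct (hH (G z) e hz) as (U & V & oU & oV & uz & ve & d).
  exists (fun w => U (G w)); split; [apply (hG U oU)|split; auto].
  intros w hw he; apply (d (G w) hw); rewrite he; exact ve.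
Qed.

Lemma open_neq_pt {Z : Type} (tZ : topology Z) (p : Z) :
  hausdorff tZ -> is_open tZ (fun z => z <> p).
Proof.
  intros hH. apply open_of_local. intros z hz.
  destruct (hH z p hz) as (U & V & oU & oV & uz & ve & d).
  exists U; split; [exact oU|split; auto].
  intros w hw he; apply (d w hw); rewrite he; exact ve.
Qed.


Lemma open_empty {Z : Type} (tZ : topology Z) : is_open tZ (fun _ => False).
Proof.
  assert (e : (fun _ : Z => False) = (fun x => exists U, (fun _ : Z -> Prop => False) U /\ U x)).
  { apply functional_extensionality; intro; apply propositional_extensionality; split; [tauto|]. intros (U & [] & _). }
  rewrite e; apply open_union; intros U [].
Qed.

Lemma open_union2 {Z : Type} (tZ : topology Z) (A B : Z -> Prop) :
  is_open tZ A -> is_open tZ B -> is_open tZ (fun z => A z \/ B z).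
Proof.
  intros hA hB; apply open_of_local; intros z [h|h].
  - exists A; repeat split; auto.
  - exists B; repeat split; auto.
Qed.

Definition sep {Z : Type} (tZ : topology Z) (A B : Z -> Prop) : Prop :=
  exists O, is_open tZ O /\ (forall z, A z -> O z -> False) /\ (forall z, O z \/ B z).

Lemma sep_sub {Z : Type} (tZ : topology Z) (A B : Z -> Prop) : sep tZ A B -> forall z, A z -> B z.
Proof. intros (O & _ & d & c) z hz. destruct (c z); auto. exfalso; eauto. Qed.

Lemma regular {Z : Type} (tZ : topology Z) (W : Z -> Prop) (x : Z) :
  compact_space tZ -> hausdorff tZ -> is_open tZ W -> W x ->
  exists V, is_open tZ V /\ V x /\ sep tZ V W.
Proof.
  intros hc hh oW wx.
  set (Fam := fun Q : Z -> Prop => Q = W \/ (is_open tZ Q /\ exists V, is_open tZ V /\ V x /\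
        forall z, V z -> Q z -> False)).
  destruct (hc Fam) as (l & hl & cov).
  - intros U [e | [o _]]; [subst; auto | auto].
  - intro z. destruct (classic (W z)) as [h|h]; [exists W; split; [left; auto | auto]|].
    assert (hne : x <> z) by (intro e; subst; auto).
    destruct (hh x z hne) as (U & V & oU & oV & ux & vz & d).
    exists V; split; auto. right; split; auto. exists U; repeat split; auto.
  - assert (H : forall l, (forall Q, In Q l -> Fam Q) -> exists V O, is_open tZ V /\ V x /\ is_open tZ O /\
       (forall z, V z -> O z -> False) /\ forall Q, In Q l -> forall z, Q z -> O z \/ W z).
    { induction l0 as [|Q l' IH]; intro hl0.
      - exists (fun _ => True), (fun _ => False); repeat split; auto using open_full, open_empty; intros Q [].
      - destruct IH as (V & O & oV & vx & oO & d & s). { intros; apply hl0; right; auto. }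
        destruct (hl0 Q (or_introl eq_refl)) as [e | (oQ & V' & oV' & vx' & d')].
        + exists V, O; repeat split; auto. intros Q' [e'|i] z hz; [subst; right; auto | eauto].
        + exists (fun z => V z /\ V' z), (fun z => O z \/ Q z); repeat split; auto.
          * apply open_inter; auto.
          * apply open_union2; auto.
          * intros z [a b] [c|c]; eauto.
          * intros Q' [e'|i] z hz; [subst; left; right; auto|].
            destruct (s Q' i z hz); auto. }
    destruct (H l hl) as (V & O & oV & vx & oO & d & s).
    exists V; repeat split; auto. exists O; repeat split; auto.
    intro z; destruct (cov z) as (Q & iQ & qz). eapply s; eauto.
Qed.

Lemma normal {Z : Type} (tZ : topology Z) (A B : Z -> Prop) :
  compact_space tZ -> hausdorff tZ -> is_open tZ B -> sep tZ A B ->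
  exists C, is_open tZ C /\ sep tZ A C /\ sep tZ C B.
Proof.
  intros hc hh oB (O & oO & dAO & cOB).
  set (Fam := fun Q : Z -> Prop => Q = O \/ (is_open tZ Q /\ exists P, is_open tZ P /\
        (forall z, Q z -> P z -> False) /\ forall z, P z \/ B z)).
  destruct (hc Fam) as (l & hl & cov).
  - intros U [e | [o _]]; [subst; auto | auto].
  - intro z. destruct (cOB z) as [h|h]; [exists O; split; [left; auto | auto]|].
    destruct (regular tZ B z hc hh oB h) as (V & oV & vz & (P & oP & d & c)).
    exists V; split; auto. right; split; auto. exists P; repeat split; auto.
  - assert (H : forall l, (forall Q, In Q l -> Fam Q) -> exists C P, is_open tZ C /\ is_open tZ P /\
       (forall z, C z -> P z -> False) /\ (forall z, P z \/ B z) /\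
       forall Q, In Q l -> forall z, Q z -> O z \/ C z).
    { induction l0 as [|Q l' IH]; intro hl0.
      - exists (fun _ => False), (fun _ => True); repeat split; auto using open_full, open_empty; intros Q [].
      - destruct IH as (C & P & oC & oP & d & cP & s). { intros; apply hl0; right; auto. }
        destruct (hl0 Q (or_introl eq_refl)) as [e | (oQ & P' & oP' & d' & cP')].
        + exists C, P; repeat split; auto. intros Q' [e'|i] z hz; [subst; left; auto | eauto].
        + exists (fun z => C z \/ Q z), (fun z => P z /\ P' z); repeat split; auto.
          * apply open_union2; auto.
          * apply open_inter; auto.
          * intros z [c|c] [a b]; eauto.
          * intro z; destruct (cP z); destruct (cP' z); tauto.
          * intros Q' [e'|i] z hz; [subst; right; right; auto|].
            destruct (s Q' i z hz); auto. }
    destruct (H l hl) as (C & P & oC & oP & d & cP & s).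
    exists C; repeat split; auto.
    + exists O; repeat split; auto. intro z; destruct (cov z) as (Q & iQ & qz). eapply s; eauto.
    + exists P; repeat split; auto.
Qed.

Definition mid {Z : Type} (tZ : topology Z) (A B : Z -> Prop) : Z -> Prop :=
  epsilon (inhabits (fun _ : Z => False)) (fun C => is_open tZ C /\ sep tZ A C /\ sep tZ C B).

Lemma mid_spec {Z : Type} (tZ : topology Z) (A B : Z -> Prop) :
  compact_space tZ -> hausdorff tZ -> is_open tZ B -> sep tZ A B ->
  is_open tZ (mid tZ A B) /\ sep tZ A (mid tZ A B) /\ sep tZ (mid tZ A B) B.
Proof.
  intros hc hh oB s. unfold mid. apply epsilon_spec. apply normal; auto.
Qed.

Fixpoint UU {Z : Type} (tZ : topology Z) (A0 W : Z -> Prop) (n m : nat) : Z -> Prop :=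
  match n with
  | O => if Nat.eqb m 0 then A0 else W
  | S n' => if Nat.leb (2 ^ n) m then W else
            if Nat.even m then UU tZ A0 W n' (Nat.div2 m)
            else mid tZ (UU tZ A0 W n' (Nat.div2 m)) (UU tZ A0 W n' (S (Nat.div2 m)))
  end.

Lemma pow2_pos (n : nat) : (1 <= 2 ^ n)%nat.
Proof. induction n; simpl; lia. Qed.

Lemma UU_inv {Z : Type} (tZ : topology Z) (A0 W : Z -> Prop) :
  compact_space tZ -> hausdorff tZ -> is_open tZ A0 -> is_open tZ W -> sep tZ A0 W ->
  forall n, (forall m, is_open tZ (UU tZ A0 W n m)) /\
            (forall m, (2 ^ n <= m)%nat -> UU tZ A0 W n m = W) /\
            (forall m, (m < 2 ^ n)%nat -> sep tZ (UU tZ A0 W n m) (UU tZ A0 W n (S m))).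
Proof.
  intros hc hh oA oW s0. induction n as [|n IH].
  - simpl. split; [|split].
    + intro m; destruct (Nat.eqb m 0); auto.
    + intros m hm. destruct (Nat.eqb_spec m 0); [lia|auto].
    + intros m hm. assert (m = 0)%nat by lia. subst. simpl. exact s0.
  - destruct IH as (op & hi & sp).
    assert (hU : forall m, UU tZ A0 W (S n) m = if Nat.leb (2 ^ S n) m then W else
            if Nat.even m then UU tZ A0 W n (Nat.div2 m)
            else mid tZ (UU tZ A0 W n (Nat.div2 m)) (UU tZ A0 W n (S (Nat.div2 m)))) by reflexivity.
    assert (hpow : (2 ^ S n = 2 * 2 ^ n)%nat) by (simpl; lia).
    assert (hev : forall j, (2 * j < 2 ^ S n)%nat -> UU tZ A0 W (S n) (2 * j) = UU tZ A0 W n j).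
    { intros j hj. rewrite hU. destruct (Nat.leb_spec (2 ^ S n) (2 * j)); [lia|].
      rewrite Nat.even_even, Nat.div2_double. reflexivity. }
    assert (hod : forall j, (2 * j + 1 < 2 ^ S n)%nat -> UU tZ A0 W (S n) (2 * j + 1) =
              mid tZ (UU tZ A0 W n j) (UU tZ A0 W n (S j))).
    { intros j hj. rewrite hU. destruct (Nat.leb_spec (2 ^ S n) (2 * j + 1)); [lia|].
      rewrite Nat.even_odd, Nat.div2_odd'. reflexivity. }
    assert (hbig : forall m, (2 ^ S n <= m)%nat -> UU tZ A0 W (S n) m = W).
    { intros m hm. rewrite hU. destruct (Nat.leb_spec (2 ^ S n) m); [auto|lia]. }
    assert (hmid : forall j, (j < 2 ^ n)%nat -> is_open tZ (mid tZ (UU tZ A0 W n j) (UU tZ A0 W n (S j))) /\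
              sep tZ (UU tZ A0 W n j) (mid tZ (UU tZ A0 W n j) (UU tZ A0 W n (S j))) /\
              sep tZ (mid tZ (UU tZ A0 W n j) (UU tZ A0 W n (S j))) (UU tZ A0 W n (S j))).
    { intros j hj; apply mid_spec; auto. }
    split; [|split]; auto.
    + intro m. destruct (Nat.leb_spec (2 ^ S n) m) as [h|h]; [rewrite hbig; auto|].
      destruct (Nat.Even_or_Odd m) as [[j ->]|[j ->]].
      * rewrite hev by auto. auto.
      * rewrite hod by auto. apply hmid. lia.
    + intros m hm. destruct (Nat.Even_or_Odd m) as [[j ->]|[j ->]].
      * rewrite hev by auto. replace (S (2 * j)) with (2 * j + 1)%nat by lia.
        rewrite hod by lia. apply hmid. lia.
      * rewrite hod by auto. replace (S (2 * j + 1)) with (2 * S j)%nat by lia.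
        destruct (Nat.leb_spec (2 ^ S n) (2 * S j)) as [h|h].
        -- rewrite hbig by auto. destruct (hmid j ltac:(lia)) as (_ & _ & h3).
           set (M := mid tZ (UU tZ A0 W n j) (UU tZ A0 W n (S j))) in *.
           rewrite (hi (S j)) in h3 by lia. exact h3.
        -- rewrite hev by auto. apply hmid; lia.
Qed.


Lemma UU_S {Z : Type} (tZ : topology Z) (A0 W : Z -> Prop) n m :
  UU tZ A0 W (S n) m = if Nat.leb (2 ^ S n) m then W else
            if Nat.even m then UU tZ A0 W n (Nat.div2 m)
            else mid tZ (UU tZ A0 W n (Nat.div2 m)) (UU tZ A0 W n (S (Nat.div2 m))).
Proof. reflexivity. Qed.

Lemma UU_double {Z : Type} (tZ : topology Z) (A0 W : Z -> Prop) :
  compact_space tZ -> hausdorff tZ -> is_open tZ A0 -> is_open tZ W -> sep tZ A0 W ->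
  forall n m, UU tZ A0 W (S n) (2 * m) = UU tZ A0 W n m.
Proof.
  intros hc hh oA oW s0 n m. rewrite UU_S.
  destruct (Nat.leb_spec (2 ^ S n) (2 * m)) as [h|h].
  - symmetry. apply (UU_inv tZ A0 W hc hh oA oW s0 n). simpl in h; lia.
  - rewrite Nat.even_even, Nat.div2_double. reflexivity.
Qed.

Lemma UU_lift {Z : Type} (tZ : topology Z) (A0 W : Z -> Prop) :
  compact_space tZ -> hausdorff tZ -> is_open tZ A0 -> is_open tZ W -> sep tZ A0 W ->
  forall j n m, UU tZ A0 W n m = UU tZ A0 W (n + j) (m * 2 ^ j).
Proof.
  intros hc hh oA oW s0 j. induction j as [|j IH]; intros n m.
  - rewrite Nat.add_0_r, Nat.pow_0_r, Nat.mul_1_r. reflexivity.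
  - rewrite Nat.add_succ_r. replace (m * 2 ^ S j)%nat with (2 * (m * 2 ^ j))%nat by (simpl; ring).
    rewrite (UU_double tZ A0 W hc hh oA oW s0). apply IH.
Qed.

Lemma UU_mono {Z : Type} (tZ : topology Z) (A0 W : Z -> Prop) :
  compact_space tZ -> hausdorff tZ -> is_open tZ A0 -> is_open tZ W -> sep tZ A0 W ->
  forall n m m' z, (m <= m')%nat -> UU tZ A0 W n m z -> UU tZ A0 W n m' z.
Proof.
  intros hc hh oA oW s0 n m m' z hle. induction hle as [|m' hle IH]; auto.
  intro h; specialize (IH h).
  destruct (UU_inv tZ A0 W hc hh oA oW s0 n) as (_ & hi & sp).
  destruct (Nat.lt_ge_cases m' (2 ^ n)) as [l|l].
  - eapply sep_sub; eauto.
  - rewrite hi in * by lia. auto.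
Qed.

Lemma UU_cross {Z : Type} (tZ : topology Z) (A0 W : Z -> Prop) :
  compact_space tZ -> hausdorff tZ -> is_open tZ A0 -> is_open tZ W -> sep tZ A0 W ->
  forall n m n' m' z, UU tZ A0 W n' m' z -> (m' * 2 ^ n <= m * 2 ^ n')%nat -> UU tZ A0 W n m z.
Proof.
  intros hc hh oA oW s0 n m n' m' z h hl.
  rewrite (UU_lift tZ A0 W hc hh oA oW s0 n n' m') in h.
  rewrite (UU_lift tZ A0 W hc hh oA oW s0 n' n m). rewrite (Nat.add_comm n' n) in h.
  eapply UU_mono; eauto.
Qed.

Lemma least_elt (Q : nat -> Prop) (m : nat) : Q m ->
  exists m0, (m0 <= m)%nat /\ Q m0 /\ forall j, (j < m0)%nat -> ~ Q j.
Proof.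
  induction m as [m IH] using lt_wf_ind. intro hm.
  destruct (classic (exists j, (j < m)%nat /\ Q j)) as [(j & hj & qj)|hn].
  - destruct (IH j hj qj) as (m0 & a & b & c). exists m0; repeat split; auto. lia.
  - exists m; repeat split; auto. intros j hj qj; apply hn; eauto.
Qed.

Lemma D_pos (n : nat) : 0 < INR (2 ^ n).
Proof. apply lt_0_INR. pose proof (pow2_pos n); lia. Qed.

Lemma div_lt_cross (a b c d : R) : 0 < b -> 0 < d -> a / b < c / d -> a * d < c * b.
Proof.
  intros hb hd h.
  replace (a * d) with ((a / b) * (b * d)) by (field; lra).
  replace (c * b) with ((c / d) * (b * d)) by (field; lra).
  apply Rmult_lt_compat_r; auto. nra.
Qed.

Lemma n_le_pow2 (n : nat) : (n <= 2 ^ n)%nat.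
Proof. induction n; simpl; [lia|]. pose proof (pow2_pos n); lia. Qed.

Lemma Rdiv_nonneg (a b : R) : 0 <= a -> 0 < b -> 0 <= a / b.
Proof. intros; unfold Rdiv; apply Rmult_le_pos; auto. left; apply Rinv_0_lt_compat; auto. Qed.

Definition Pset {Z : Type} (tZ : topology Z) (A0 W : Z -> Prop) (z : Z) (t : R) : Prop :=
  t = 0 \/ exists n m, (m <= 2 ^ n)%nat /\ UU tZ A0 W n m z /\ t = 1 - INR m / INR (2 ^ n).

Lemma Pset_bound {Z : Type} (tZ : topology Z) (A0 W : Z -> Prop) z : bound (Pset tZ A0 W z).
Proof.
  exists 1. intros t [->|(n & m & _ & _ & ->)]; [lra|].
  pose proof (D_pos n). assert (0 <= INR m / INR (2 ^ n)) by (apply Rdiv_nonneg; auto using pos_INR).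
  lra.
Qed.

Lemma Pset_ex {Z : Type} (tZ : topology Z) (A0 W : Z -> Prop) z : exists t, Pset tZ A0 W z t.
Proof. exists 0; left; auto. Qed.

Definition kfun {Z : Type} (tZ : topology Z) (A0 W : Z -> Prop) (z : Z) : R :=
  proj1_sig (completeness _ (Pset_bound tZ A0 W z) (Pset_ex tZ A0 W z)).

Lemma kfun_lub {Z : Type} (tZ : topology Z) (A0 W : Z -> Prop) z : is_lub (Pset tZ A0 W z) (kfun tZ A0 W z).
Proof. unfold kfun; destruct completeness; auto. Qed.

Lemma kfun_01 {Z : Type} (tZ : topology Z) (A0 W : Z -> Prop) z : 0 <= kfun tZ A0 W z <= 1.
Proof.
  destruct (kfun_lub tZ A0 W z) as [ub l]. split.
  - apply ub; left; auto.
  - apply l. intros t [->|(n & m & _ & _ & ->)]; [lra|].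
    pose proof (D_pos n). assert (0 <= INR m / INR (2 ^ n)) by (apply Rdiv_nonneg; auto using pos_INR).
    lra.
Qed.

Lemma kfun_ge {Z : Type} (tZ : topology Z) (A0 W : Z -> Prop) n m z :
  (m <= 2 ^ n)%nat -> UU tZ A0 W n m z -> 1 - INR m / INR (2 ^ n) <= kfun tZ A0 W z.
Proof.
  intros hm hu. destruct (kfun_lub tZ A0 W z) as [ub l]. apply ub. right; exists n, m; auto.
Qed.

Lemma kfun_le {Z : Type} (tZ : topology Z) (A0 W : Z -> Prop) :
  compact_space tZ -> hausdorff tZ -> is_open tZ A0 -> is_open tZ W -> sep tZ A0 W ->
  forall n m z, (m <= 2 ^ n)%nat -> ~ UU tZ A0 W n m z -> kfun tZ A0 W z <= 1 - INR m / INR (2 ^ n).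
Proof.
  intros hc hh oA oW s0 n m z hm hu. destruct (kfun_lub tZ A0 W z) as [ub l]. apply l.
  pose proof (D_pos n).
  intros t [->|(n' & m' & hm' & hu' & ->)].
  - assert (INR m / INR (2 ^ n) <= 1).
    { apply (Rmult_le_reg_r (INR (2 ^ n))); auto. unfold Rdiv; rewrite Rmult_assoc, Rinv_l by lra.
      rewrite Rmult_1_r, Rmult_1_l. apply le_INR; auto. }
    lra.
  - pose proof (D_pos n').
    destruct (Rle_or_lt (INR m / INR (2 ^ n)) (INR m' / INR (2 ^ n'))) as [h|h]; [lra|].
    exfalso; apply hu. apply div_lt_cross in h; auto.
    rewrite <- !mult_INR in h. apply INR_lt in h.
    eapply (UU_cross tZ A0 W hc hh oA oW s0 n m n' m' z); eauto. lia.
Qed.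


Lemma kfun_cont {Z : Type} (tZ : topology Z) (A0 W : Z -> Prop) :
  compact_space tZ -> hausdorff tZ -> is_open tZ A0 -> is_open tZ W -> sep tZ A0 W ->
  rcont tZ (kfun tZ A0 W).
Proof.
  intros hc hh oA oW s0 z eps he.
  destruct (archimed_cor1 (eps / 2)) as (n & hn & npos); [lra|].
  set (D := INR (2 ^ n)). assert (hD : 0 < D) by apply D_pos.
  assert (hND : INR n <= D) by (apply le_INR, n_le_pow2).
  assert (hb : 2 * (1 / D) < eps).
  { assert (/ D <= / INR n). { apply Rinv_le_contravar; auto. apply lt_0_INR; lia. } unfold Rdiv; lra. }
  destruct (UU_inv tZ A0 W hc hh oA oW s0 n) as (op & hi & sp).
  set (k := kfun tZ A0 W).
  assert (kge := fun m w hm hu => kfun_ge tZ A0 W n m w hm hu).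
  assert (kle := fun m w hm hu => kfun_le tZ A0 W hc hh oA oW s0 n m w hm hu).
  fold D k in kge, kle.
  assert (hM := pow2_pos n).
  assert (hdiv : forall m, (1 <= m)%nat -> INR (m - 1) / D = INR m / D - 1 / D).
  { intros m hm. rewrite minus_INR by auto. simpl. field. lra. }
  assert (hdiv2 : forall m, (2 <= m)%nat -> INR (m - 2) / D = INR m / D - 2 * (1 / D)).
  { intros m hm. rewrite minus_INR by auto. replace (INR 2) with 2 by (simpl; ring). field. lra. }
  assert (k01 := kfun_01 tZ A0 W). fold k in k01.
  destruct (classic (exists m, (m <= 2 ^ n)%nat /\ UU tZ A0 W n m z)) as [(m & hm & hu)|hno].
  - destruct (least_elt (fun j => (j <= 2 ^ n)%nat /\ UU tZ A0 W n j z) m (conj hm hu))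
      as (m0 & _ & (hm0 & hu0) & hmin).
    assert (lo : 1 - INR m0 / D <= k z) by (apply kge; auto).
    assert (up : k z <= 1 - INR m0 / D + 1 / D).
    { destruct m0 as [|m1].
      - simpl INR; unfold Rdiv; rewrite Rmult_0_l. pose proof (k01 z). assert (0 < 1 / D) by (unfold Rdiv; apply Rmult_lt_0_compat; [lra | apply Rinv_0_lt_compat; auto]). lra.
      - assert (e1 : (m1 <= 2 ^ n)%nat) by lia. assert (e2 : (m1 < S m1)%nat) by lia.
        assert (h := kle m1 z e1 (fun h => hmin m1 e2 (conj e1 h))).
        replace m1 with (S m1 - 1)%nat in h at 1 by lia. rewrite hdiv in h by lia. lra. }
    destruct (le_lt_dec 2 m0) as [h2|h2].
    + destruct (sp (m0 - 2)%nat ltac:(lia)) as (O & oO & dO & cO).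
      replace (S (m0 - 2)) with (m0 - 1)%nat in cO by lia.
      assert (Oz : O z).
      { destruct (cO z) as [h|h]; auto. exfalso. apply (hmin (m0 - 1)%nat); [lia|]. split; auto; lia. }
      exists (fun w => UU tZ A0 W n m0 w /\ O w); repeat split; auto.
      * apply open_inter; auto.
      * intros w [uw ow].
        assert (l1 : 1 - INR m0 / D <= k w) by (apply kge; auto).
        assert (l2 : k w <= 1 - INR (m0 - 2) / D) by (apply kle; [lia|]; intro h; eapply dO; eauto).
        rewrite hdiv2 in l2 by auto.
        unfold Rabs; destruct Rcase_abs; lra.
    + exists (UU tZ A0 W n m0); repeat split; auto.
      intros w uw.
      assert (l1 : 1 - INR m0 / D <= k w) by (apply kge; auto).
      pose proof (k01 w).
      assert (INR m0 <= 1) by (change 1 with (INR 1); apply le_INR; lia).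
      assert (INR m0 / D <= 1 / D) by (unfold Rdiv; apply Rmult_le_compat_r; [left; apply Rinv_0_lt_compat; auto | auto]).
      unfold Rabs; destruct Rcase_abs; lra.
  - assert (nz : ~ UU tZ A0 W n (2 ^ n) z) by (intro h; apply hno; eauto).
    assert (kz0 : k z = 0).
    { pose proof (kle (2 ^ n)%nat z ltac:(lia) nz). fold D in H.
      replace (D / D) with 1 in H by (field; lra). pose proof (k01 z); lra. }
    destruct (sp (2 ^ n - 1)%nat ltac:(lia)) as (O & oO & dO & cO).
    replace (S (2 ^ n - 1)) with (2 ^ n)%nat in cO by lia.
    assert (Oz : O z) by (destruct (cO z); tauto).
    exists O; repeat split; auto. intros w ow.
    assert (l2 : k w <= 1 - INR (2 ^ n - 1) / D) by (apply kle; [lia|]; intro h; eapply dO; eauto).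
    rewrite hdiv in l2 by lia. replace (INR (2 ^ n) / D) with 1 in l2 by (unfold D; field; apply Rgt_not_eq, D_pos).
    pose proof (k01 w). rewrite kz0. unfold Rabs; destruct Rcase_abs; lra.
Qed.

Lemma urysohn {Z : Type} (tZ : topology Z) (W : Z -> Prop) (x0 : Z) :
  compact_space tZ -> hausdorff tZ -> is_open tZ W -> W x0 ->
  exists k, rcont tZ k /\ (forall z, 0 <= k z <= 1) /\
    (exists A, is_open tZ A /\ A x0 /\ forall z, A z -> k z = 1) /\ (forall z, ~ W z -> k z = 0).
Proof.
  intros hc hh oW wx.
  destruct (regular tZ W x0 hc hh oW wx) as (A0 & oA & ax & s0).
  exists (kfun tZ A0 W); split; [apply kfun_cont; auto|]. split; [apply kfun_01|]. split.
  - exists A0; repeat split; auto. intros z hz.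
    pose proof (kfun_ge tZ A0 W 0 0 z ltac:(simpl; lia) hz). simpl in H.
    pose proof (kfun_01 tZ A0 W z). unfold Rdiv in H. rewrite Rmult_0_l in H. lra.
  - intros z nw. pose proof (kfun_le tZ A0 W hc hh oA oW s0 0 1 z ltac:(simpl; lia) nw).
    simpl in H. pose proof (kfun_01 tZ A0 W z). unfold Rdiv in H. rewrite Rinv_1 in H. lra.
Qed.


Definition HsT (E : cvs) (tE : topology E) :=
  continuous (prod_topology C_topology tE) tE (fun p => vscal (fst p) (snd p)).
Definition HaT (E : cvs) (tE : topology E) :=
  continuous (prod_topology tE tE) tE (fun p => vadd (fst p) (snd p)).

Lemma Cadd_neg0 (a : Cplx) : Cadd a (Cneg C0) = a.
Proof. destruct a; unfold Cadd, Cneg, C0; simpl; apply Cpair_eq; ring. Qed.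

Lemma Cmod_RtoC_le (t : R) : Cmod (RtoC t) <= Rabs t.
Proof. eapply Rle_trans; [apply Cmod_le|]. simpl. rewrite Rabs_R0; lra. Qed.

Lemma BL {X : Type} (tX : topology X) (E : cvs) (tE : topology E) :
  compact_space tX -> hausdorff tE -> HsT E tE ->
  forall (G : X -> E), continuous tX tE G -> forall w, w <> vzero ->
  exists R0, 0 < R0 /\ forall r x, R0 < r -> G x <> vscal (RtoC r) w.
Proof.
  intros hc hhE Hs G hG w hw.
  destruct (hhE w vzero hw) as (U & N & oU & oN & uw & n0 & d).
  set (Fam := fun O : X -> Prop => exists V eps, is_open tE V /\ 0 < eps /\
     (forall a e, Cmod a < eps -> V e -> N (vscal a e)) /\ O = (fun x => V (G x))).
  destruct (hc Fam) as (l & hl & cov).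
  - intros O (V & eps & oV & _ & _ & ->). apply hG; auto.
  - intro x.
    assert (hN : N (vscal (fst (C0, G x)) (snd (C0, G x)))) by (simpl; rewrite vscal_0l; auto).
    destruct (Hs N oN (C0, G x) hN) as (U1 & V1 & oU1 & oV1 & u1 & v1 & s). simpl in *.
    destruct (oU1 C0 u1) as (eps & he & hb).
    exists (fun x => V1 (G x)); split; auto.
    exists V1, eps; repeat split; auto.
    intros a e ha ve. apply s; auto. apply hb. rewrite Cadd_neg0; auto.
  - assert (H : forall l, (forall O, In O l -> Fam O) -> exists eps, 0 < eps /\
        forall O, In O l -> forall x, O x -> forall a, Cmod a < eps -> N (vscal a (G x))).
    { induction l0 as [|O l' IH]; intro hl0.
      - exists 1; split; [lra|]. intros O [].
      - destruct IH as (eps & he & s). { intros; apply hl0; right; auto. }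
        destruct (hl0 O (or_introl eq_refl)) as (V & e & oV & hee & sV & ->).
        exists (Rmin eps e); split; [apply Rmin_glb_lt; auto|].
        intros O' [<-|i] x hx a ha.
        + apply sV; auto. eapply Rlt_le_trans; [apply ha| apply Rmin_r].
        + apply (s O' i x hx). eapply Rlt_le_trans; [apply ha| apply Rmin_l]. }
    destruct (H l hl) as (eps & he & s).
    exists (2 / eps); split; [unfold Rdiv; apply Rmult_lt_0_compat; [lra| apply Rinv_0_lt_compat; auto]|].
    intros r x hr hx.
    assert (rpos : 0 < r). { assert (0 < 2 / eps) by (unfold Rdiv; apply Rmult_lt_0_compat; [lra| apply Rinv_0_lt_compat; auto]). lra. }
    destruct (cov x) as (O & iO & ox).
    assert (hm : Cmod (RtoC (/ r)) < eps).
    { eapply Rle_lt_trans; [apply Cmod_RtoC_le|]. rewrite Rabs_right by (left; apply Rinv_0_lt_compat; auto).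
      apply (Rmult_lt_reg_l r); auto. rewrite Rinv_r by lra.
      apply (Rmult_lt_compat_r eps) in hr; auto. unfold Rdiv in hr. rewrite Rmult_assoc, Rinv_l in hr by lra. lra. }
    pose proof (s O iO x ox _ hm) as hN. rewrite hx, vscalA in hN.
    replace (Cmul (RtoC (/ r)) (RtoC r)) with C1 in hN by (unfold Cmul, RtoC, C1; simpl; apply Cpair_eq; [field; lra| ring]).
    rewrite vscal1 in hN. eapply d; eauto.
Qed.

Definition cxe_const {X : Type} (tX : topology X) (E : cvs) (tE : topology E) (e : E) : CXE tX E tE :=
  exist _ (fun _ => e) (const_continuous tX tE e).

Definition cxe_scal {X : Type} (tX : topology X) (E : cvs) (tE : topology E) (Hs : HsT E tE)
  (c : X -> Cplx) (hc : ccont tX c) (G : CXE tX E tE) : CXE tX E tE :=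
  exist _ (fun x => vscal (c x) (proj1_sig G x)) (cont_scal tX E tE Hs c _ hc (proj2_sig G)).

Definition cxe_add {X : Type} (tX : topology X) (E : cvs) (tE : topology E) (Ha : HaT E tE)
  (F G : CXE tX E tE) : CXE tX E tE :=
  exist _ (fun x => vadd (proj1_sig F x) (proj1_sig G x)) (cont_add tX E tE Ha _ _ (proj2_sig F) (proj2_sig G)).

Lemma cxe_eq {X : Type} (tX : topology X) (E : cvs) (tE : topology E) (F G : CXE tX E tE) :
  (forall x, proj1_sig F x = proj1_sig G x) -> F = G.
Proof.
  destruct F as [f hf], G as [g hg]; simpl; intro e.
  assert (f = g) by (apply functional_extensionality; auto). subst. f_equal. apply proof_irrelevance.
Qed.

Lemma vsub_add_r (E : cvs) (a b : E) : vsub (vadd a b) b = a.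
Proof. rewrite vaddC. apply vsub_add_l. Qed.

Lemma vsub_eq (E : cvs) (a b c : E) : vsub a b = c -> a = vadd b c.
Proof. intro h; subst; symmetry; apply vadd_sub. Qed.

Lemma vsub_vsub (E : cvs) (a b : E) : vsub a (vsub a b) = b.
Proof. unfold vsub. rewrite vopp_add, vopp_opp, vaddA, vaddN, vadd0l. reflexivity. Qed.

Lemma vscal_add (E : cvs) (a b : Cplx) (u : E) : vadd (vscal a u) (vscal b u) = vscal (Cadd a b) u.
Proof. rewrite vscalDl; reflexivity. Qed.

Lemma vzero_scal (E : cvs) (u : E) : vzero = vscal C0 u.
Proof. rewrite vscal_0l; reflexivity. Qed.


Definition addF {X : Type} (tX : topology X) (E : cvs) (tE : topology E) (Ha : HaT E tE) (Hs : HsT E tE) (u : E)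
  (F : CXE tX E tE) (lam : Cplx) (k : X -> R) (hk : rcont tX k) : CXE tX E tE :=
  cxe_add tX E tE Ha F (cxe_scal tX E tE Hs (fun x => Cmul lam (RtoC (k x))) (ccont_scale_real tX lam k hk)
     (cxe_const tX E tE u)).

Definition realF {X : Type} (tX : topology X) (E : cvs) (tE : topology E) (Hs : HsT E tE) (u : E)
  (k : X -> R) (hk : rcont tX k) : CXE tX E tE :=
  cxe_scal tX E tE Hs (fun x => RtoC (k x)) (ccont_real tX k hk) (cxe_const tX E tE u).

Lemma S_ran (X : Type) (tX : topology X) (E : cvs) (tE : topology E) (hc : compact_space tX) (hhX : hausdorff tX) (hhE : hausdorff tE) (Ha : HaT E tE) (Hs : HsT E tE) (S : CXE tX E tE -> E) (HR : forall F G : CXE tX E tE, exists x, vsub (S F) (S G) = vsub (proj1_sig F x) (proj1_sig G x)) (H0 : S (zeroCXE tX E tE) = vzero) (u : E) (hu : u <> vzero) : forall F, exists x, S F = proj1_sig F x.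
Proof.
  intro F. destruct (HR F (zeroCXE tX E tE)) as (x & h). exists x.
  rewrite H0 in h. simpl in h. rewrite !vsub_0r in h. exact h.
Qed.

Lemma Cmul_C0 (a : Cplx) : Cmul C0 a = C0.
Proof. destruct a; unfold Cmul, C0; simpl; apply Cpair_eq; ring. Qed.

Lemma DL (X : Type) (tX : topology X) (E : cvs) (tE : topology E) (hc : compact_space tX) (hhX : hausdorff tX) (hhE : hausdorff tE) (Ha : HaT E tE) (Hs : HsT E tE) (S : CXE tX E tE -> E) (HR : forall F G : CXE tX E tE, exists x, vsub (S F) (S G) = vsub (proj1_sig F x) (proj1_sig G x)) (H0 : S (zeroCXE tX E tE) = vzero) (u : E) (hu : u <> vzero) : forall F k hk, exists a, forall lam,
  S (addF tX E tE Ha Hs u F lam k hk) = vadd (S F) (vscal (Cmul lam (RtoC a)) u).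
Proof.
  intros F k hk.
  set (Q := fun lam => S (addF tX E tE Ha Hs u F lam k hk)).
  assert (Q0 : Q C0 = S F).
  { unfold Q. f_equal. apply cxe_eq. intro x; simpl. rewrite Cmul_C0, vscal_0l, vadd0. reflexivity. }
  assert (hdiff : forall lam mu, exists x, vsub (Q lam) (Q mu) =
     vscal (Csub (Cmul lam (RtoC (k x))) (Cmul mu (RtoC (k x)))) u).
  { intros lam mu. destruct (HR (addF tX E tE Ha Hs u F lam k hk) (addF tX E tE Ha Hs u F mu k hk)) as (x & h).
    exists x. unfold Q. rewrite h. simpl. rewrite vsub_add2, vscal_sub. reflexivity. }
  assert (hone : forall lam, exists r, Q lam = vadd (S F) (vscal (Cmul lam (RtoC r)) u)).
  { intro lam. destruct (hdiff lam C0) as (x & h). exists (k x). rewrite Q0 in h.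
    apply vsub_eq in h. rewrite h. f_equal. f_equal.
    destruct lam; unfold Csub, Cadd, Cneg, Cmul, C0, RtoC; simpl; apply Cpair_eq; ring. }
  assert (hpair : forall lam mu rl rm, Q lam = vadd (S F) (vscal (Cmul lam (RtoC rl)) u) ->
     Q mu = vadd (S F) (vscal (Cmul mu (RtoC rm)) u) ->
     exists t, fst (Csub (Cmul lam (RtoC rl)) (Cmul mu (RtoC rm))) = fst (Csub (Cmul lam (RtoC t)) (Cmul mu (RtoC t)))
       /\ snd (Csub (Cmul lam (RtoC rl)) (Cmul mu (RtoC rm))) = snd (Csub (Cmul lam (RtoC t)) (Cmul mu (RtoC t)))).
  { intros lam mu rl rm hl hm. destruct (hdiff lam mu) as (x & h).
    rewrite hl, hm, vsub_add2, vscal_sub in h. exists (k x). apply vscal_inj in h; auto. }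
  destruct (hone C1) as (r1 & h1). destruct (hone (0, 1)) as (ri & hi).
  destruct (hpair C1 (0, 1) r1 ri h1 hi) as (t & e1 & e2).
  unfold Csub, Cadd, Cneg, Cmul, RtoC, C1 in e1, e2; simpl in e1, e2.
  assert (hr1 : r1 = t) by lra. assert (hri : ri = t) by lra.
  exists r1. intro lam. destruct (hone lam) as (rl & hl). fold (Q lam). rewrite hl. f_equal. f_equal.
  destruct lam as [l1 l2].
  destruct (Req_dec l2 0) as [z|nz].
  - subst l2. destruct (hpair (l1, 0) (0, 1) rl ri hl hi) as (t' & f1 & f2).
    unfold Csub, Cadd, Cneg, Cmul, RtoC in f1, f2; simpl in f1, f2.
    unfold Cmul, RtoC; simpl. apply Cpair_eq; [|ring]. nra.
  - destruct (hpair (l1, l2) C1 rl r1 hl h1) as (t' & f1 & f2).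
    unfold Csub, Cadd, Cneg, Cmul, RtoC, C1 in f1, f2; simpl in f1, f2.
    assert (rl = t'). { apply (Rmult_eq_reg_l l2); auto. nra. }
    assert (e3 : rl = r1) by nra. rewrite e3. reflexivity.
Qed.


Definition Adef {X : Type} (tX : topology X) (E : cvs) (tE : topology E) (Hs : HsT E tE)
  (S : CXE tX E tE -> E) (u : E) (k : X -> R) (t : R) : Prop :=
  exists hk, S (realF tX E tE Hs u k hk) = vscal (RtoC t) u.

Lemma A_any (X : Type) (tX : topology X) (E : cvs) (tE : topology E) (hc : compact_space tX) (hhX : hausdorff tX) (hhE : hausdorff tE) (Ha : HaT E tE) (Hs : HsT E tE) (S : CXE tX E tE -> E) (HR : forall F G : CXE tX E tE, exists x, vsub (S F) (S G) = vsub (proj1_sig F x) (proj1_sig G x)) (H0 : S (zeroCXE tX E tE) = vzero) (u : E) (hu : u <> vzero) : forall k t, Adef tX E tE Hs S u k t -> forall hk, S (realF tX E tE Hs u k hk) = vscal (RtoC t) u.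
Proof.
  intros k t (hk' & h) hk. rewrite <- h. f_equal. apply cxe_eq. reflexivity.
Qed.

Lemma A_ex (X : Type) (tX : topology X) (E : cvs) (tE : topology E) (hc : compact_space tX) (hhX : hausdorff tX) (hhE : hausdorff tE) (Ha : HaT E tE) (Hs : HsT E tE) (S : CXE tX E tE -> E) (HR : forall F G : CXE tX E tE, exists x, vsub (S F) (S G) = vsub (proj1_sig F x) (proj1_sig G x)) (H0 : S (zeroCXE tX E tE) = vzero) (u : E) (hu : u <> vzero) : forall k (hk : rcont tX k), exists t, Adef tX E tE Hs S u k t /\ exists x, t = k x.
Proof.
  intros k hk. destruct (S_ran X tX E tE hc hhX hhE Ha Hs S HR H0 u hu (realF tX E tE Hs u k hk)) as (x & h).
  exists (k x); split; [exists hk; exact h| exists x; auto].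
Qed.

Lemma A_uniq (X : Type) (tX : topology X) (E : cvs) (tE : topology E) (hc : compact_space tX) (hhX : hausdorff tX) (hhE : hausdorff tE) (Ha : HaT E tE) (Hs : HsT E tE) (S : CXE tX E tE -> E) (HR : forall F G : CXE tX E tE, exists x, vsub (S F) (S G) = vsub (proj1_sig F x) (proj1_sig G x)) (H0 : S (zeroCXE tX E tE) = vzero) (u : E) (hu : u <> vzero) : forall k t t', Adef tX E tE Hs S u k t -> Adef tX E tE Hs S u k t' -> t = t'.
Proof.
  intros k t t' (hk & h) h'. rewrite (A_any X tX E tE hc hhX hhE Ha Hs S HR H0 u hu k t' h' hk) in h.
  apply vscal_inj in h; auto. destruct h as [h _]. simpl in h. auto.
Qed.

Lemma lin2 (X : Type) (tX : topology X) (E : cvs) (tE : topology E) (hc : compact_space tX) (hhX : hausdorff tX) (hhE : hausdorff tE) (Ha : HaT E tE) (Hs : HsT E tE) (S : CXE tX E tE -> E) (HR : forall F G : CXE tX E tE, exists x, vsub (S F) (S G) = vsub (proj1_sig F x) (proj1_sig G x)) (H0 : S (zeroCXE tX E tE) = vzero) (u : E) (hu : u <> vzero) : forall k1 hk1 k2 hk2 t1 t2, Adef tX E tE Hs S u k1 t1 -> Adef tX E tE Hs S u k2 t2 ->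
  forall lam, S (addF tX E tE Ha Hs u (realF tX E tE Hs u k1 hk1) lam k2 hk2) =
     vscal (Cadd (RtoC t1) (Cmul lam (RtoC t2))) u.
Proof.
  intros k1 hk1 k2 hk2 t1 t2 A1 A2 lam.
  destruct (DL X tX E tE hc hhX hhE Ha Hs S HR H0 u hu (realF tX E tE Hs u k1 hk1) k2 hk2) as (a' & ha').
  destruct (DL X tX E tE hc hhX hhE Ha Hs S HR H0 u hu (zeroCXE tX E tE) k2 hk2) as (a2 & ha2).
  assert (e2 : a2 = t2).
  { pose proof (ha2 C1) as h. rewrite H0, vadd0l in h.
    assert (h' : S (addF tX E tE Ha Hs u (zeroCXE tX E tE) C1 k2 hk2) = S (realF tX E tE Hs u k2 hk2)).
    { f_equal. apply cxe_eq. intro x; simpl. rewrite vadd0l. f_equal. unfold Cmul, C1, RtoC; simpl; apply Cpair_eq; ring. }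
    rewrite h', (A_any X tX E tE hc hhX hhE Ha Hs S HR H0 u hu k2 t2 A2 hk2) in h. apply vscal_inj in h; auto. destruct h as [h _].
    unfold Cmul, C1, RtoC in h; simpl in h. lra. }
  assert (e' : a' = a2).
  { destruct (HR (addF tX E tE Ha Hs u (realF tX E tE Hs u k1 hk1) (0,1) k2 hk2)
                 (addF tX E tE Ha Hs u (zeroCXE tX E tE) (0,1) k2 hk2)) as (x & h).
    rewrite ha', ha2, H0, (A_any X tX E tE hc hhX hhE Ha Hs S HR H0 u hu k1 t1 A1 hk1) in h. simpl in h.
    rewrite !vadd0l, vsub_add_r, vscal_add, vscal_sub in h.
    apply vscal_inj in h; auto. destruct h as [_ h].
    unfold Csub, Cadd, Cneg, Cmul, RtoC in h; simpl in h. lra. }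
  rewrite ha', (A_any X tX E tE hc hhX hhE Ha Hs S HR H0 u hu k1 t1 A1 hk1), vscal_add. congruence.
Qed.

Definition Cl {X : Type} (tX : topology X) (E : cvs) (tE : topology E) (Hs : HsT E tE)
  (S : CXE tX E tE -> E) (u : E) (g : X -> R) : Prop :=
  rcont tX g /\ (forall x, 0 <= g x) /\ Adef tX E tE Hs S u g 0.

Lemma Cl_zero_pt (X : Type) (tX : topology X) (E : cvs) (tE : topology E) (hc : compact_space tX) (hhX : hausdorff tX) (hhE : hausdorff tE) (Ha : HaT E tE) (Hs : HsT E tE) (S : CXE tX E tE -> E) (HR : forall F G : CXE tX E tE, exists x, vsub (S F) (S G) = vsub (proj1_sig F x) (proj1_sig G x)) (H0 : S (zeroCXE tX E tE) = vzero) (u : E) (hu : u <> vzero) : forall g, Cl tX E tE Hs S u g -> exists x, g x = 0.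
Proof.
  intros g (hg & _ & A). destruct (A_ex X tX E tE hc hhX hhE Ha Hs S HR H0 u hu g hg) as (t & At & x & ->).
  exists x. symmetry. eapply A_uniq; eauto.
Qed.

Lemma Cl_sum (X : Type) (tX : topology X) (E : cvs) (tE : topology E) (hc : compact_space tX) (hhX : hausdorff tX) (hhE : hausdorff tE) (Ha : HaT E tE) (Hs : HsT E tE) (S : CXE tX E tE -> E) (HR : forall F G : CXE tX E tE, exists x, vsub (S F) (S G) = vsub (proj1_sig F x) (proj1_sig G x)) (H0 : S (zeroCXE tX E tE) = vzero) (u : E) (hu : u <> vzero) : forall g1 g2, Cl tX E tE Hs S u g1 -> Cl tX E tE Hs S u g2 ->
  Cl tX E tE Hs S u (fun x => g1 x + g2 x).
Proof.
  intros g1 g2 (h1 & p1 & A1) (h2 & p2 & A2). split; [apply rcont_add; auto|]. split.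
  - intro x; specialize (p1 x); specialize (p2 x); lra.
  - exists (rcont_add tX g1 g2 h1 h2).
    transitivity (S (addF tX E tE Ha Hs u (realF tX E tE Hs u g1 h1) C1 g2 h2)).
    + f_equal. apply cxe_eq. intro x; simpl. rewrite vscal_add. f_equal.
      unfold Cmul, Cadd, C1, RtoC; simpl; apply Cpair_eq; ring.
    + rewrite (lin2 X tX E tE hc hhX hhE Ha Hs S HR H0 u hu g1 h1 g2 h2 0 0 A1 A2 C1). f_equal.
      unfold Cmul, Cadd, C1, RtoC; simpl; apply Cpair_eq; ring.
Qed.

Lemma Cl_const0 (X : Type) (tX : topology X) (E : cvs) (tE : topology E) (hc : compact_space tX) (hhX : hausdorff tX) (hhE : hausdorff tE) (Ha : HaT E tE) (Hs : HsT E tE) (S : CXE tX E tE -> E) (HR : forall F G : CXE tX E tE, exists x, vsub (S F) (S G) = vsub (proj1_sig F x) (proj1_sig G x)) (H0 : S (zeroCXE tX E tE) = vzero) (u : E) (hu : u <> vzero) : Cl tX E tE Hs S u (fun _ => 0).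
Proof.
  split; [apply rcont_const|]. split; [intro; lra|].
  exists (rcont_const tX 0). change (RtoC 0) with C0. rewrite vscal_0l, <- H0.
  f_equal. apply cxe_eq. intro x; simpl. change (RtoC 0) with C0. apply vscal_0l.
Qed.

Lemma x0_exists (X : Type) (tX : topology X) (E : cvs) (tE : topology E) (hc : compact_space tX) (hhX : hausdorff tX) (hhE : hausdorff tE) (Ha : HaT E tE) (Hs : HsT E tE) (S : CXE tX E tE -> E) (HR : forall F G : CXE tX E tE, exists x, vsub (S F) (S G) = vsub (proj1_sig F x) (proj1_sig G x)) (H0 : S (zeroCXE tX E tE) = vzero) (u : E) (hu : u <> vzero) : exists x0, forall g, Cl tX E tE Hs S u g -> g x0 = 0.
Proof.
  apply NNPP; intro hn.
  assert (hall : forall x, exists g, Cl tX E tE Hs S u g /\ 0 < g x).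
  { intro x. apply NNPP; intro h2. apply hn. exists x. intros g hg. apply NNPP; intro h3.
    apply h2. exists g; split; auto. destruct hg as (_ & p & _). specialize (p x). lra. }
  set (Fam := fun O : X -> Prop => exists g, Cl tX E tE Hs S u g /\ O = (fun x => 0 < g x)).
  destruct (hc Fam) as (l & hl & cov).
  - intros O (g & (hg & _) & ->). apply open_pos; auto.
  - intro x. destruct (hall x) as (g & hg & px). exists (fun x => 0 < g x); split; auto. exists g; auto.
  - assert (H : forall l, (forall O, In O l -> Fam O) -> exists G, Cl tX E tE Hs S u G /\ forall O, In O l -> forall x, O x -> 0 < G x).
    { induction l0 as [|O l' IH]; intro hl0.
      - exists (fun _ => 0); split; [apply (Cl_const0 X tX E tE hc hhX hhE Ha Hs S HR H0 u hu)|]. intros O [].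
      - destruct IH as (G & hG & s). { intros; apply hl0; right; auto. }
        destruct (hl0 O (or_introl eq_refl)) as (g & hg & ->).
        exists (fun x => G x + g x); split; [apply (Cl_sum X tX E tE hc hhX hhE Ha Hs S HR H0 u hu); auto|].
        destruct hG as (_ & pG & _); destruct hg as (_ & pg & _).
        intros O' [<-|i] x hx.
        + specialize (pG x); lra.
        + specialize (s O' i x hx); specialize (pg x); lra. }
    destruct (H l hl) as (G & hG & s).
    destruct (Cl_zero_pt X tX E tE hc hhX hhE Ha Hs S HR H0 u hu G hG) as (x & hx).
    destruct (cov x) as (O & iO & ox). specialize (s O iO x ox). lra.
Qed.


Lemma Rmax_prod (a : R) : Rmax a 0 * Rmax (- a) 0 = 0.
Proof. unfold Rmax; destruct (Rle_dec a 0); destruct (Rle_dec (-a) 0); ring_simplify; try lra; nra. Qed.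

Lemma eval_pt (X : Type) (tX : topology X) (E : cvs) (tE : topology E) (hc : compact_space tX) (hhX : hausdorff tX) (hhE : hausdorff tE) (Ha : HaT E tE) (Hs : HsT E tE) (S : CXE tX E tE -> E) (HR : forall F G : CXE tX E tE, exists x, vsub (S F) (S G) = vsub (proj1_sig F x) (proj1_sig G x)) (H0 : S (zeroCXE tX E tE) = vzero) (u : E) (hu : u <> vzero) : forall x0, (forall g, Cl tX E tE Hs S u g -> g x0 = 0) ->
  forall k (hk : rcont tX k) t, Adef tX E tE Hs S u k t -> k x0 = t.
Proof.
  intros x0 hx0 k hk t At.
  set (p := fun x => Rmax (k x + - t) 0).
  set (n := fun x => Rmax (-1 * k x + t) 0).
  assert (hp : rcont tX p) by (apply rcont_max0, rcont_add; [auto| apply rcont_const]).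
  assert (hn : rcont tX n) by (apply rcont_max0, rcont_add; [apply rcont_scal; auto| apply rcont_const]).
  destruct (A_ex X tX E tE hc hhX hhE Ha Hs S HR H0 u hu p hp) as (tp & Ap & _).
  destruct (A_ex X tX E tE hc hhX hhE Ha Hs S HR H0 u hu n hn) as (tn & An & _).
  destruct (A_ex X tX E tE hc hhX hhE Ha Hs S HR H0 u hu (fun _ => 1) (rcont_const tX 1)) as (t1 & A1 & x1 & e1). simpl in e1. subst t1.
  assert (eq1 : tp = tn).
  { pose proof (lin2 X tX E tE hc hhX hhE Ha Hs S HR H0 u hu p hp n hn tp tn Ap An (-1, 0)) as h1.
    pose proof (lin2 X tX E tE hc hhX hhE Ha Hs S HR H0 u hu k hk (fun _ => 1) (rcont_const tX 1) t 1 At A1 (RtoC (- t))) as h2.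
    assert (h3 : addF tX E tE Ha Hs u (realF tX E tE Hs u p hp) (-1, 0) n hn =
                 addF tX E tE Ha Hs u (realF tX E tE Hs u k hk) (RtoC (- t)) (fun _ => 1) (rcont_const tX 1)).
    { apply cxe_eq. intro x; simpl. rewrite !vscal_add. f_equal.
      unfold Cadd, Cmul, RtoC; simpl. unfold p, n.
      assert (Rmax (k x + - t) 0 - Rmax (-1 * k x + t) 0 = k x - t)
        by (unfold Rmax; destruct Rle_dec; destruct Rle_dec; lra).
      apply Cpair_eq; lra. }
    rewrite h3, h2 in h1. apply vscal_inj in h1; auto. destruct h1 as [h1 _].
    unfold Cadd, Cmul, RtoC in h1; simpl in h1. lra. }
  assert (eq2 : tp = 0).
  { pose proof (lin2 X tX E tE hc hhX hhE Ha Hs S HR H0 u hu p hp n hn tp tn Ap An (0, 1)) as h1.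
    destruct (S_ran X tX E tE hc hhX hhE Ha Hs S HR H0 u hu (addF tX E tE Ha Hs u (realF tX E tE Hs u p hp) (0, 1) n hn)) as (x & hx).
    rewrite h1 in hx. simpl in hx. rewrite vscal_add in hx. apply vscal_inj in hx; auto.
    destruct hx as [f1 f2]. unfold Cadd, Cmul, RtoC in f1, f2; simpl in f1, f2.
    assert (pn : p x * n x = 0).
    { unfold p, n. replace (-1 * k x + t) with (- (k x + - t)) by ring. apply Rmax_prod. }
    assert (tp = p x) by lra. assert (tn = n x) by lra. nra. }
  assert (Cp : Cl tX E tE Hs S u p).
  { split; auto. split; [intro; apply Rmax_r|]. rewrite <- eq2; auto. }
  assert (Cn : Cl tX E tE Hs S u n).
  { split; auto. split; [intro; apply Rmax_r|]. rewrite <- eq2, eq1; auto. }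
  pose proof (hx0 p Cp) as e3. pose proof (hx0 n Cn) as e4. unfold p, n in e3, e4.
  revert e3 e4; unfold Rmax; destruct Rle_dec; destruct Rle_dec; intros; lra.
Qed.

Lemma real_eval (X : Type) (tX : topology X) (E : cvs) (tE : topology E) (hc : compact_space tX) (hhX : hausdorff tX) (hhE : hausdorff tE) (Ha : HaT E tE) (Hs : HsT E tE) (S : CXE tX E tE -> E) (HR : forall F G : CXE tX E tE, exists x, vsub (S F) (S G) = vsub (proj1_sig F x) (proj1_sig G x)) (H0 : S (zeroCXE tX E tE) = vzero) (u : E) (hu : u <> vzero) : forall x0, (forall g, Cl tX E tE Hs S u g -> g x0 = 0) ->
  forall k (hk : rcont tX k) lam, S (addF tX E tE Ha Hs u (zeroCXE tX E tE) lam k hk) =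
    vscal (Cmul lam (RtoC (k x0))) u.
Proof.
  intros x0 hx0 k hk lam.
  destruct (DL X tX E tE hc hhX hhE Ha Hs S HR H0 u hu (zeroCXE tX E tE) k hk) as (a & ha).
  destruct (A_ex X tX E tE hc hhX hhE Ha Hs S HR H0 u hu k hk) as (t & At & _).
  assert (e : a = t).
  { pose proof (ha C1) as h. rewrite H0, vadd0l in h.
    assert (h' : S (addF tX E tE Ha Hs u (zeroCXE tX E tE) C1 k hk) = S (realF tX E tE Hs u k hk)).
    { f_equal. apply cxe_eq. intro x; simpl. rewrite vadd0l. f_equal. unfold Cmul, C1, RtoC; simpl; apply Cpair_eq; ring. }
    rewrite h', (A_any X tX E tE hc hhX hhE Ha Hs S HR H0 u hu k t At hk) in h. apply vscal_inj in h; auto. destruct h as [h _].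
    unfold Cmul, C1, RtoC in h; simpl in h. lra. }
  rewrite ha, H0, vadd0l, (eval_pt X tX E tE hc hhX hhE Ha Hs S HR H0 u hu x0 hx0 k hk t At), e. reflexivity.
Qed.


Lemma ccont_const {Z : Type} (tZ : topology Z) (c : Cplx) : ccont tZ (fun _ => c).
Proof.
  intros z eps he. exists (fun _ => True); split; [apply open_full|split; auto].
  intros w _. unfold Cmod, Cadd, Cneg. simpl.
  replace (fst c + - fst c) with 0 by ring. replace (snd c + - snd c) with 0 by ring.
  rewrite Rmult_0_l, Rplus_0_l, sqrt_0. auto.
Qed.

Lemma locality (X : Type) (tX : topology X) (E : cvs) (tE : topology E) (hc : compact_space tX) (hhX : hausdorff tX) (hhE : hausdorff tE) (Ha : HaT E tE) (Hs : HsT E tE) (S : CXE tX E tE -> E) (HR : forall F G : CXE tX E tE, exists x, vsub (S F) (S G) = vsub (proj1_sig F x) (proj1_sig G x)) (H0 : S (zeroCXE tX E tE) = vzero) (u : E) (hu : u <> vzero) : forall x0, (forall g, Cl tX E tE Hs S u g -> g x0 = 0) ->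
  forall (H : CXE tX E tE) (W : X -> Prop), is_open tX W -> W x0 ->
  (forall x, W x -> proj1_sig H x = vzero) -> S H = vzero.
Proof.
  intros x0 hx0 H W oW wx hH. apply NNPP; intro hd.
  destruct (urysohn tX W x0 hc hhX oW wx) as (k & hk & k01 & (A & oA & Ax & kA) & kW).
  assert (kx0 : k x0 = 1) by auto.
  assert (hSF : forall lam, S (addF tX E tE Ha Hs u (zeroCXE tX E tE) lam k hk) = vscal lam u).
  { intro lam. rewrite (real_eval X tX E tE hc hhX hhE Ha Hs S HR H0 u hu x0 hx0 k hk lam), kx0. f_equal.
    destruct lam; unfold Cmul, RtoC; simpl; apply Cpair_eq; ring. }
  assert (key : forall lam, exists x, vsub (S H) (vscal lam u) =
     vsub (proj1_sig H x) (vadd vzero (vscal (Cmul lam (RtoC (k x))) u))).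
  { intro lam. destruct (HR H (addF tX E tE Ha Hs u (zeroCXE tX E tE) lam k hk)) as (x & h).
    exists x. rewrite hSF in h. rewrite h. reflexivity. }
  assert (offW : forall lam x, ~ W x -> vadd vzero (vscal (Cmul lam (RtoC (k x))) u) = vzero).
  { intros lam x nw. rewrite kW by auto. rewrite vadd0l.
    replace (Cmul lam (RtoC 0)) with C0 by (destruct lam; unfold Cmul, RtoC, C0; simpl; apply Cpair_eq; ring).
    apply vscal_0l. }
  destruct (classic (exists c, S H = vscal c u)) as [(c & hc')|hnc].
  - assert (cnz : c <> C0) by (intro e; apply hd; rewrite hc', e; apply vscal_0l).
    destruct (BL tX E tE hc hhE Hs (proj1_sig H) (proj2_sig H) (S H) hd) as (R0 & hR0 & hB).
    destruct (key (Cmul (RtoC (- R0)) c)) as (x & h).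
    destruct (classic (W x)) as [w|nw].
    + rewrite hH in h by auto. rewrite vadd0l, hc' in h.
      rewrite <- (vscal_0l E u) in h. rewrite !vscal_sub in h.
      apply vscal_inj in h; auto. destruct h as [f1 f2].
      destruct c as [c1 c2]. unfold Csub, Cadd, Cneg, Cmul, RtoC, C0 in f1, f2; simpl in f1, f2.
      pose proof (k01 x).
      assert (pos : 0 < 1 + R0 - R0 * k x) by nra.
      assert (e1 : c1 * (1 + R0 - R0 * k x) = 0) by nra.
      assert (e2 : c2 * (1 + R0 - R0 * k x) = 0) by nra.
      apply Rmult_integral in e1. apply Rmult_integral in e2.
      apply cnz. unfold C0. apply Cpair_eq; lra.
    + rewrite (offW _ _ nw), vsub_0r in h.
      apply (hB (1 + R0) x); [lra|]. rewrite <- h, hc', vscal_sub, vscalA. f_equal.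
      destruct c; unfold Csub, Cadd, Cneg, Cmul, RtoC; simpl; apply Cpair_eq; ring.
  - set (G' := fun x => vadd (S H) (vscal (-1, 0) (proj1_sig H x))).
    assert (hG' : continuous tX tE G').
    { apply (cont_add tX E tE Ha); [apply const_continuous|].
      apply (cont_scal tX E tE Hs); [apply ccont_const| apply (proj2_sig H)]. }
    destruct (BL tX E tE hc hhE Hs G' hG' u hu) as (R0 & hR0 & hB).
    destruct (key (RtoC (R0 + 1))) as (x & h).
    destruct (classic (W x)) as [w|nw].
    + rewrite hH in h by auto. rewrite vadd0l in h.
      rewrite <- (vscal_0l E u) in h. rewrite vscal_sub in h. apply vsub_eq in h.
      rewrite vscal_add in h. apply hnc. eexists; exact h.
    + rewrite (offW _ _ nw), vsub_0r in h.
      apply (hB (R0 + 1) x); [lra|]. unfold G'. rewrite <- vopp_scal.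
      change (vsub (S H) (proj1_sig H x) = vscal (RtoC (R0 + 1)) u).
      rewrite <- h. apply vsub_vsub.
Qed.


Lemma vanish (X : Type) (tX : topology X) (E : cvs) (tE : topology E) (hc : compact_space tX) (hhX : hausdorff tX) (hhE : hausdorff tE) (Ha : HaT E tE) (Hs : HsT E tE) (S : CXE tX E tE -> E) (HR : forall F G : CXE tX E tE, exists x, vsub (S F) (S G) = vsub (proj1_sig F x) (proj1_sig G x)) (H0 : S (zeroCXE tX E tE) = vzero) (u : E) (hu : u <> vzero)
  (hLC : forall N, nbhd tE vzero N -> exists V, nbhd tE vzero V /\ convex V /\ (forall x, V x -> N x)) :
  forall x0, (forall g, Cl tX E tE Hs S u g -> g x0 = 0) ->
  forall G : CXE tX E tE, proj1_sig G x0 = vzero -> S G = vzero.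
Proof.
  intros x0 hx0 G hG0. apply NNPP; intro hne.
  destruct (hhE (S G) vzero hne) as (U & N & oU & oN & uS & n0 & d).
  destruct (hLC N) as (V & (O & oO & O0 & OV) & cV & VN). { exists N; auto. }
  set (W' := fun x => O (proj1_sig G x)).
  assert (oW' : is_open tX W') by (apply (proj2_sig G); auto).
  assert (wx : W' x0) by (unfold W'; rewrite hG0; auto).
  destruct (urysohn tX W' x0 hc hhX oW' wx) as (k & hk & k01 & (A & oA & Ax & kA) & kW).
  assert (hk' : rcont tX (fun x => 1 + -1 * k x)) by (apply rcont_add; [apply rcont_const|apply rcont_scal; auto]).
  set (Hc := cxe_scal tX E tE Hs (fun x => RtoC (1 + -1 * k x)) (ccont_real tX _ hk') G).
  assert (SH : S Hc = vzero).
  { apply (locality X tX E tE hc hhX hhE Ha Hs S HR H0 u hu x0 hx0 Hc A oA Ax). intros x ax. simpl. rewrite (kA x ax).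
    replace (RtoC (1 + -1 * 1)) with C0 by (unfold RtoC, C0; apply Cpair_eq; ring). apply vscal_0l. }
  destruct (HR G Hc) as (x & h). rewrite SH, vsub_0r in h. simpl in h.
  rewrite <- (vscal1 E (proj1_sig G x)) in h at 1. rewrite vscal_sub in h.
  replace (Csub C1 (RtoC (1 + -1 * k x))) with (RtoC (k x)) in h
    by (unfold Csub, Cadd, Cneg, C1, RtoC; simpl; apply Cpair_eq; ring).
  assert (V0 : V vzero) by auto.
  assert (VS : V (S G)).
  { rewrite h. destruct (classic (W' x)) as [w|nw].
    - pose proof (cV (proj1_sig G x) vzero (k x) (OV _ w) V0 (k01 x)) as hv.
      rewrite vscal_0r, vadd0 in hv. exact hv.
    - rewrite (kW x nw). change (RtoC 0) with C0. rewrite vscal_0l. exact V0. }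
  exact (d (S G) uS (VN _ VS)).
Qed.

Lemma vsub_add_self (E : cvs) (a b : E) : vsub a (vadd a b) = vopp b.
Proof. unfold vsub. rewrite vopp_add, vaddA, vaddN, vadd0l. reflexivity. Qed.

Lemma point (X : Type) (tX : topology X) (E : cvs) (tE : topology E) (hc : compact_space tX) (hhX : hausdorff tX) (hhE : hausdorff tE) (Ha : HaT E tE) (Hs : HsT E tE) (S : CXE tX E tE -> E) (HR : forall F G : CXE tX E tE, exists x, vsub (S F) (S G) = vsub (proj1_sig F x) (proj1_sig G x)) (H0 : S (zeroCXE tX E tE) = vzero) (u : E) (hu : u <> vzero)
  (hLC : forall N, nbhd tE vzero N -> exists V, nbhd tE vzero V /\ convex V /\ (forall x, V x -> N x)) :
  exists x0, forall F, S F = proj1_sig F x0.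
Proof.
  destruct (x0_exists X tX E tE hc hhX hhE Ha Hs S HR H0 u hu) as (x0 & hx0). exists x0. intro F.
  set (F' := cxe_add tX E tE Ha F (cxe_const tX E tE (vopp (proj1_sig F x0)))).
  assert (SF' : S F' = vzero).
  { apply (vanish X tX E tE hc hhX hhE Ha Hs S HR H0 u hu hLC x0 hx0). simpl. apply vaddN. }
  destruct (HR F F') as (x & h). rewrite SF', vsub_0r in h. simpl in h.
  rewrite vsub_add_self, vopp_opp in h. exact h.
Qed.


Theorem theorem1p1
  (X Y : Type) (tX : topology X) (tY : topology Y)
  (E : cvs) (tE : topology E)
  (HX : inhabited X /\ compact_space tX /\ hausdorff tX)
  (HY : inhabited Y /\ compact_space tY /\ hausdorff tY)
  (HE : locally_convex E tE)
  (HEnz : exists v : E, v <> vzero)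
  (T : CXE tX E tE -> CXE tY E tE)
  (HT : forall F G : CXE tX E tE, forall y : Y, exists x : X,
      vsub (proj1_sig (T F) y) (proj1_sig (T G) y) = vsub (proj1_sig F x) (proj1_sig G x)) :
  (exists phi : Y -> X, continuous tY tX phi /\
     forall (F : CXE tX E tE) (y : Y),
       proj1_sig (T F) y = vadd (proj1_sig (T (zeroCXE tX E tE)) y) (proj1_sig F (phi y)))
  /\
  ((forall y, proj1_sig (T (zeroCXE tX E tE)) y = vzero) ->
     (forall F G H : CXE tX E tE,
        (forall x, proj1_sig H x = vadd (proj1_sig F x) (proj1_sig G x)) ->
        forall y, proj1_sig (T H) y = vadd (proj1_sig (T F) y) (proj1_sig (T G) y)) /\
     (forall (a : Cplx) (F H : CXE tX E tE),
        (forall x, proj1_sig H x = vscal a (proj1_sig F x)) ->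
        forall y, proj1_sig (T H) y = vscal a (proj1_sig (T F) y))).
Proof.
  destruct HX as (inhX & hcX & hhX). destruct HY as (_ & _ & hhY).
  destruct HE as (hhE & Ha & Hs & hLC). destruct HEnz as (u & hu).
  set (Z := zeroCXE tX E tE).
  set (Sy := fun y (F : CXE tX E tE) => vsub (proj1_sig (T F) y) (proj1_sig (T Z) y)).
  assert (hpt : forall y, exists x0, forall F, Sy y F = proj1_sig F x0).
  { intro y. assert (HR : forall F G : CXE tX E tE, exists x, vsub (Sy y F) (Sy y G) = vsub (proj1_sig F x) (proj1_sig G x)).
    { intros F G. unfold Sy. rewrite vsub_sub. apply HT. }
    assert (H0 : Sy y Z = vzero) by (unfold Sy; apply vsub_self).
    exact (point X tX E tE hcX hhX hhE Ha Hs (Sy y) HR H0 u hu hLC). }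
  set (phi := fun y => epsilon inhX (fun x0 => forall F, Sy y F = proj1_sig F x0)).
  assert (hphi : forall y F, Sy y F = proj1_sig F (phi y)).
  { intro y. unfold phi. apply (epsilon_spec inhX (fun x0 => forall F, Sy y F = proj1_sig F x0)). apply hpt. }
  assert (dec : forall F y, proj1_sig (T F) y = vadd (proj1_sig (T Z) y) (proj1_sig F (phi y))).
  { intros F y. apply vsub_eq. apply hphi. }
  split.
  - exists phi. split; [|exact dec].
    intros V oV. apply open_of_local. intros y hy.
    destruct (urysohn tX V (phi y) hcX hhX oV hy) as (k & hk & k01 & (A & oA & Ax & kA) & kW).
    set (Fk := realF tX E tE Hs u k hk).
    set (g := fun y' => vadd (proj1_sig (T Fk) y') (vscal (-1, 0) (proj1_sig (T Z) y'))).
    assert (hg : continuous tY tE g).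
    { apply (cont_add tY E tE Ha); [apply (proj2_sig (T Fk))|].
      apply (cont_scal tY E tE Hs); [apply ccont_const| apply (proj2_sig (T Z))]. }
    assert (gS : forall y', g y' = vscal (RtoC (k (phi y'))) u).
    { intro y'. unfold g. rewrite <- vopp_scal. change (Sy y' Fk = vscal (RtoC (k (phi y'))) u).
      rewrite hphi. reflexivity. }
    exists (fun y' => g y' <> vzero). split; [apply (open_neq tY E tE g vzero hhE hg)|]. split.
    + rewrite gS, (kA _ Ax). intro e. apply vscal_zero_inv in e; auto.
      unfold RtoC, C0 in e. injection e; intros; lra.
    + intros y' hy'. apply NNPP; intro nv. apply hy'. rewrite gS, (kW _ nv).
      change (RtoC 0) with C0. apply vscal_0l.
  - intros hz. assert (d0 : forall F y, proj1_sig (T F) y = proj1_sig F (phi y)).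
    { intros F y. rewrite dec. fold Z. rewrite hz. apply vadd0l. }
    split.
    + intros F G H hH y. rewrite !d0. apply hH.
    + intros a F H hH y. rewrite !d0. apply hH.
Qed.
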